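(* Let $P_n(x)$ be a real polynomial all of whose roots are real, with $m\ge 3$ distinct roots $p_1<\dots<p_m$. Let $\mu=\min_{i\ne j}|p_i-p_j|$ and $M=\max_{i,j}|p_i-p_j|$. Define $$\mu_0^2=\Big[\sum_{1\le i<j\le m}(p_i-p_j)^{-2}\Big]^{-1},\qquad \mu_k^2=\Big(\sum_{1\le i<j\le m}\frac{1}{(p_i-p_j)^2-\mu_{k-1}^2}\Big)^{-1}+\mu_{k-1}^2\ (k\ge1),$$ $$M_0^2=\sum_{1\le i<j\le m}(p_j-p_i)^2,\qquad M_k^2=\Big(\sum_{1\le i<j\le m}\frac{1}{(p_i-p_j)^2-M_{k-1}^2}\Big)^{-1}+M_{k-1}^2\ (k\ge1).$$ Then these are well defined with $0<\mu_k<\mu$ and $M_k>M$ for all $k\ge0$, and each $\mu_k^2$ and each $M_k^2$ ($k=0,1,2,\dots$) can be expressed as a rational function of the coefficients of $P_n(x)$. *)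

(* Defs.v *)
From mathcomp Require Import all_boot all_order all_algebra.
From mathcomp Require Import mpoly.
Set Implicit Arguments. Unset Strict Implicit. Unset Printing Implicit Defensive.
Import Order.TTheory GRing.Theory Num.Theory.
Local Open Scope ring_scope.

Section Defs.
Variable R : rcfType.

Definition all_roots_real (P : {poly R}) : Prop :=
  exists rs : seq R, P = lead_coef P *: \prod_(r <- rs) ('X - r%:P).

Definition pairsum (m : nat) (p : 'I_m -> R) (f : R -> R) : R :=
  \sum_(i < m) \sum_(j < m | (i < j)%N) f (p i - p j).

Definition Mdiam (m : nat) (p : 'I_m -> R) : R :=
  \big[Num.max/0]_(i < m) \big[Num.max/0]_(j < m) `|p i - p j|.

(* mu = min_{i <> j} |p_i - p_j|  (the seed Mdiam p is itself one of the
   values |p_i - p_j| as soon as m >= 2, so it does not affect the minimum) *)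
Definition mudist (m : nat) (p : 'I_m -> R) : R :=
  \big[Num.min/Mdiam p]_(i < m) \big[Num.min/Mdiam p]_(j < m | i != j) `|p i - p j|.

Fixpoint mu2 (m : nat) (p : 'I_m -> R) (k : nat) : R :=
  match k with
  | 0 => (pairsum p (fun d => (d ^+ 2)^-1))^-1
  | k'.+1 => (pairsum p (fun d => (d ^+ 2 - mu2 p k')^-1))^-1 + mu2 p k'
  end.

Fixpoint M2 (m : nat) (p : 'I_m -> R) (k : nat) : R :=
  match k with
  | 0 => pairsum p (fun d => d ^+ 2)
  | k'.+1 => (pairsum p (fun d => (d ^+ 2 - M2 p k')^-1))^-1 + M2 p k'
  end.

Definition muk (m : nat) (p : 'I_m -> R) (k : nat) : R := Num.sqrt (mu2 p k).
Definition Mk (m : nat) (p : 'I_m -> R) (k : nat) : R := Num.sqrt (M2 p k).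

(* Well-definedness of the recursion with value sequence s: every inverse
   taken in the definition is the inverse of a nonzero quantity. *)
Definition wd_step (m : nat) (p : 'I_m -> R) (c : R) : Prop :=
  (forall i j : 'I_m, (i < j)%N -> (p i - p j) ^+ 2 - c != 0) /\
  pairsum p (fun d => (d ^+ 2 - c)^-1) != 0.

Definition coefs (P : {poly R}) : 'I_(size P) -> R := fun i => P`_i.
Arguments coefs : clear implicits.

(* x is the value at the coefficients of P of a rational function with
   rational coefficients in the coefficients of P (denominator nonzero there) *)
Definition rat_fun_of_coefs (P : {poly R}) (x : R) : Prop :=
  exists N D : {mpoly rat[size P]},
    (map_mpoly (ratr : rat -> R) D).@[coefs P] != 0 /\
    x = (map_mpoly (ratr : rat -> R) N).@[coefs P]
        / (map_mpoly (ratr : rat -> R) D).@[coefs P].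

End Defs.

(* Main.v *)
Require Import Defs.
From HB Require Import structures.
From mathcomp Require Import all_boot all_order all_algebra.
From mathcomp Require Import fingroup perm.
From mathcomp Require Import mpoly.
From mathcomp Require Import ring.
From Stdlib Require Import ClassicalEpsilon.
Import Order.TTheory GRing.Theory Num.Theory.
Local Open Scope ring_scope.

Section Bounds.
Variables (R : rcfType) (m : nat) (p : 'I_m -> R).
Hypothesis m3 : (3 <= m)%N.
Hypothesis pinc : forall i j : 'I_m, (i < j)%N -> p i < p j.

Lemma pairsumE (f : R -> R) :
  pairsum p f = \sum_(u : 'I_m * 'I_m | (u.1 < u.2)%N) f (p u.1 - p u.2).
Proof. by rewrite /pairsum pair_big_dep. Qed.

Lemma other_pair (a b : 'I_m) : exists u : 'I_m * 'I_m, (u.1 < u.2)%N /\ u != (a, b).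
Proof.
have h0 : (0 < m)%N by apply: leq_trans m3.
have h1 : (1 < m)%N by apply: leq_trans m3.
have h2 : (2 < m)%N by [].
pose o0 := Ordinal h0; pose o1 := Ordinal h1; pose o2 := Ordinal h2.
case: (eqVneq (a, b) (o0, o1)) => [E|N].
  by exists (o0, o2); split => //; rewrite E.
by exists (o0, o1); split => //; rewrite eq_sym.
Qed.

Lemma pairsum_gt (t : R -> R) (a b : 'I_m) : (a < b)%N ->
  (forall i j : 'I_m, (i < j)%N -> 0 < t (p i - p j)) ->
  t (p a - p b) < pairsum p t.
Proof.
move=> ab tpos; rewrite pairsumE (bigD1 (a, b)) //=.
rewrite ltrDl.
have [u [u12 uab]] := other_pair a b.
rewrite (bigD1 u) /=; last by rewrite u12 uab.
apply: ltr_pwDl; first exact: tpos.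
apply: sumr_ge0 => v /andP [/andP [v12 _] _]; apply: ltW; exact: tpos v.1 v.2 v12.
Qed.


Lemma pairsum_pos (t : R -> R) :
  (forall i j : 'I_m, (i < j)%N -> 0 < t (p i - p j)) -> 0 < pairsum p t.
Proof.
move=> tpos.
have h0 : (0 < m)%N by apply: leq_trans m3.
have h1 : (1 < m)%N by apply: leq_trans m3.
apply: lt_trans (@pairsum_gt t (Ordinal h0) (Ordinal h1) isT tpos); exact: tpos.
Qed.

Lemma d2pos (i j : 'I_m) : (i < j)%N -> 0 < (p i - p j) ^+ 2.
Proof.
move=> ij; rewrite exprn_even_gt0 //= subr_eq0; apply/negP => /eqP E.
by have := pinc _ _ ij; rewrite E ltxx.
Qed.

Lemma mu_bound k : 0 < mu2 p k /\ forall i j : 'I_m, (i < j)%N -> mu2 p k < (p i - p j) ^+ 2.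
Proof.
elim: k => [|k [c0 cb]] /=.
  have Spos : forall i j : 'I_m, (i < j)%N -> 0 < ((p i - p j) ^+ 2)^-1.
    by move=> i j ij; rewrite invr_gt0 d2pos.
  have h0 : (0 < m)%N by apply: leq_trans m3.
  have h1 : (1 < m)%N by apply: leq_trans m3.
  have Spos' : 0 < pairsum p (fun d => (d ^+ 2)^-1).
    apply: lt_trans (@pairsum_gt (fun d => (d ^+ 2)^-1) (Ordinal h0) (Ordinal h1) isT Spos) => //.
    exact: Spos.
  split; first by rewrite invr_gt0.
  move=> i j ij; have := pairsum_gt (fun d => (d ^+ 2)^-1) _ _ ij Spos.
  rewrite invf_plt ?posrE ?d2pos //.
set t := fun d : R => (d ^+ 2 - mu2 p k)^-1.
have tpos : forall i j : 'I_m, (i < j)%N -> 0 < t (p i - p j).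
  by move=> i j ij; rewrite /t invr_gt0 subr_gt0 cb.
have h0 : (0 < m)%N by apply: leq_trans m3.
have h1 : (1 < m)%N by apply: leq_trans m3.
have Spos : 0 < pairsum p t.
  apply: lt_trans (@pairsum_gt t (Ordinal h0) (Ordinal h1) isT tpos) => //.
  exact: tpos.
split; first by apply: ltr_wpDl c0 => //; apply/ltW; rewrite invr_gt0.
move=> i j ij; have ht := pairsum_gt t _ _ ij tpos.
by rewrite -ltrBrDr invf_plt ?posrE // ?subr_gt0 ?cb.
Qed.

Lemma M_bound k : 0 < M2 p k /\ forall i j : 'I_m, (i < j)%N -> (p i - p j) ^+ 2 < M2 p k.
Proof.
have h0 : (0 < m)%N by apply: leq_trans m3.
have h1 : (1 < m)%N by apply: leq_trans m3.
suff H : forall i j : 'I_m, (i < j)%N -> (p i - p j) ^+ 2 < M2 p k.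
  split => //; apply: lt_trans (H (Ordinal h0) (Ordinal h1) _) => //.
  exact: d2pos.
elim: k => [|k IH] /=.
  by move=> i j ij; apply: (pairsum_gt (fun d => d ^+ 2)) => // *; apply: d2pos.
set t := fun d : R => (M2 p k - d ^+ 2)^-1.
have tpos : forall i j : 'I_m, (i < j)%N -> 0 < t (p i - p j).
  by move=> i j ij; rewrite /t invr_gt0 subr_gt0 IH.
have E : pairsum p (fun d => (d ^+ 2 - M2 p k)^-1) = - pairsum p t.
  rewrite /pairsum -sumrN; apply: eq_bigr => i _; rewrite -sumrN.
  by apply: eq_bigr => j _; rewrite /t -invrN opprB.
move=> i j ij; rewrite E invrN.
have ht := pairsum_gt t _ _ ij tpos.
have Tpos : 0 < pairsum p t by apply: lt_trans ht; exact: tpos.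
rewrite [_ + M2 p k]addrC ltrBrDr -ltrBrDl invf_plt ?posrE // ?subr_gt0 ?IH //.
Qed.

End Bounds.

Set Implicit Arguments. Unset Strict Implicit. Unset Printing Implicit Defensive.

Definition pdec (P : Prop) : bool :=
  if excluded_middle_informative P then true else false.
Lemma pdecP (P : Prop) : reflect P (pdec P).
Proof. by rewrite /pdec; case: excluded_middle_informative => h; constructor. Qed.

Definition ev (R : rcfType) (n : nat) (v : 'I_n -> R) (q : {mpoly rat[n]}) : R :=
  (map_mpoly (ratr : rat -> R) q).@[v].

Section EvProps.
Variables (R : rcfType) (n : nat) (v : 'I_n -> R).
Lemma evD x y : ev v (x + y) = ev v x + ev v y.
Proof. by rewrite /ev rmorphD /= mevalD. Qed.
Lemma evN x : ev v (- x) = - ev v x.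
Proof. by rewrite /ev rmorphN /= mevalN. Qed.
Lemma evM x y : ev v (x * y) = ev v x * ev v y.
Proof. by rewrite /ev rmorphM /= mevalM. Qed.
Lemma ev1 : ev v 1 = 1.
Proof. by rewrite /ev rmorph1 /= meval1. Qed.
Lemma evC c : ev v c%:MP = ratr c.
Proof. by rewrite /ev map_mpolyC mevalC. Qed.
Lemma evX i : ev v 'X_i = v i.
Proof. by rewrite /ev /map_mpoly mmapX mmap1U mevalXU. Qed.
End EvProps.

Definition inS (R : rcfType) (n : nat) (v : 'I_n -> R) (x : R) : Prop :=
  exists N D : {mpoly rat[n]}, ev v D != 0 /\ x = ev v N / ev v D.

Definition Sb (R : rcfType) (n : nat) (v : 'I_n -> R) : {pred R} :=
  fun x => pdec (inS v x).

Section SbProps.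
Variables (R : rcfType) (n : nat) (v : 'I_n -> R).

Lemma SbP x : reflect (inS v x) (x \in Sb v).
Proof. exact: pdecP. Qed.

Lemma Sb_ev q : ev v q \in Sb v.
Proof. by apply/SbP; exists q, 1; rewrite ev1 oner_neq0 divr1. Qed.

Lemma Sb_closed : divring_closed (Sb v).
Proof.
split.
- by rewrite -(ev1 v) Sb_ev.
- move=> x y /SbP [N1 [D1 [D1n ->]]] /SbP [N2 [D2 [D2n ->]]].
  apply/SbP; exists (N1 * D2 - N2 * D1), (D1 * D2).
  rewrite evM mulf_neq0 //; split => //.
  rewrite evD evN !evM; field.
  by rewrite D1n D2n.
- move=> x y /SbP [N1 [D1 [D1n ->]]] /SbP [N2 [D2 [D2n ->]]].
  have [N20|N2n] := eqVneq (ev v N2) 0.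
    by rewrite N20 mul0r invr0 mulr0; apply/SbP; exists 0, 1; rewrite ev1 oner_neq0 -(ev1 v) ev1 /ev rmorph0 meval0 mul0r.
  apply/SbP; exists (N1 * D2), (D1 * N2).
  rewrite evM mulf_neq0 //; split => //.
  rewrite !evM; field.
  by rewrite D1n D2n N2n.
Qed.

End SbProps.

HB.instance Definition _ (R : rcfType) (n : nat) (v : 'I_n -> R) :=
  GRing.isDivringClosed.Build R (Sb v) (Sb_closed v).

Section Test.
Variables (R : rcfType) (n : nat) (v : 'I_n -> R).
Lemma test x y : x \in Sb v -> y \in Sb v -> x * y^-1 + 3%:R \in Sb v.
Proof. by move=> hx hy; rewrite rpredD ?rpredM ?rpredV ?rpred_nat. Qed.
Lemma test2 (q : {poly R}) : q \is a polyOver (Sb v) -> q^`() \is a polyOver (Sb v).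
Proof. exact: polyOver_deriv. Qed.
End Test.

Section PolyOverField.
Variables (F : fieldType) (S : divringClosed F).

Lemma size_sub_lt (p q : {poly F}) : size q = size p -> lead_coef q = lead_coef p ->
  (0 < size p)%N -> (size (p - q)%R < size p)%N.
Proof.
move=> sz ld sp; rewrite -[X in (_ < X)%N](prednK sp) ltnS.
apply/leq_sizeP => j hj; rewrite coefB.
case: (ltngtP j (size p).-1) => [|gt|eq]; first by rewrite ltnNge hj.
  have gt' : (size p <= j)%N by rewrite -(prednK sp).
  by rewrite !nth_default ?subrr // sz.
by rewrite eq; move: ld; rewrite !lead_coefE sz => ->; rewrite subrr.
Qed.

Lemma div_exists (d p : {poly F}) : d \is a polyOver S -> p \is a polyOver S -> d != 0 ->
  exists q r, [/\ q \is a polyOver S, r \is a polyOver S, p = q * d + r & (size r < size d)%N].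
Proof.
move=> Sd Sp d0.
have sd : (0 < size d)%N by rewrite size_poly_gt0.
move: {2}(size p) (leqnn (size p)) => k; elim: k p Sp => [|k IH] p Sp szp.
  move: szp; rewrite leqn0 size_poly_eq0 => /eqP ->.
  by exists 0, 0; rewrite mul0r addr0 size_poly0 rpred0.
case: (ltnP (size p) (size d)) => [lt|ge].
  by exists 0, p; rewrite mul0r add0r rpred0.
have p0 : p != 0 by rewrite -size_poly_gt0; apply: leq_trans ge.
pose c := lead_coef p / lead_coef d.
have c0 : c != 0 by rewrite mulf_neq0 ?invr_eq0 ?lead_coef_eq0.
pose j := (size p - size d)%N.
pose t := (c *: 'X^j) * d.
have Xj0 : c *: 'X^j != 0 by rewrite scaler_eq0 negb_or c0 /= -size_poly_gt0 size_polyXn.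
have szt : size t = size p.
  rewrite size_mul // size_scale // size_polyXn addSn /= subnK //.
have ldt : lead_coef t = lead_coef p.
  by rewrite lead_coefM lead_coefZ lead_coefXn mulr1 divfK ?lead_coef_eq0.
have Sc : c \in S by rewrite rpred_div //; apply/polyOverP.
have St : t \is a polyOver S by rewrite rpredM // polyOverZ // polyOverXn.
have [q1 [r1 [Sq1 Sr1 E hr1]]] : exists q r, [/\ q \is a polyOver S, r \is a polyOver S, p - t = q * d + r & (size r < size d)%N].
  apply: IH; first by rewrite rpredB.
  rewrite -ltnS; apply: leq_trans szp; apply: size_sub_lt => //.
  by rewrite size_poly_gt0.
exists (q1 + c *: 'X^j), r1; split => //.
  by rewrite rpredD // polyOverZ // polyOverXn.
by rewrite mulrDl -addrAC -E -/t subrK.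
Qed.

Lemma modp_over (p d : {poly F}) : d \is a polyOver S -> p \is a polyOver S -> p %% d \is a polyOver S.
Proof.
move=> Sd Sp; have [->|d0] := eqVneq d 0; first by rewrite modp0.
have [q [r [_ Sr E hr]]] := div_exists Sd Sp d0.
by rewrite -(modpP E hr).
Qed.

Lemma gcd_exists (p q : {poly F}) : p \is a polyOver S -> q \is a polyOver S ->
  exists g, g \is a polyOver S /\ g %= gcdp p q.
Proof.
move: {2}(size q) (leqnn (size q)) => k; elim: k p q => [|k IH] p q szq Sp Sq.
  move: szq; rewrite leqn0 size_poly_eq0 => /eqP ->.
  by exists p; rewrite gcdp0 eqpxx.
have [->|q0] := eqVneq q 0; first by exists p; rewrite gcdp0 eqpxx.
have Sr := modp_over Sq Sp.
have [g [Sg Eg]] : exists g, g \is a polyOver S /\ g %= gcdp q (p %% q).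
  apply: IH => //; rewrite -ltnS; apply: leq_trans szq.
  by rewrite ltn_modp.
exists g; split => //; apply: eqp_trans Eg _.
apply: eqp_trans (gcdpC _ _) _; exact: gcdp_modl.
Qed.

Lemma divexact_over (p d : {poly F}) : d \is a polyOver S -> p \is a polyOver S -> d != 0 ->
  d %| p -> exists q, q \is a polyOver S /\ p = q * d.
Proof.
move=> Sd Sp d0 dp; have [q [r [Sq _ E hr]]] := div_exists Sd Sp d0.
exists q; split => //; move: dp; rewrite /dvdp -(modpP E hr) => /eqP r0.
by rewrite E r0 addr0.
Qed.

End PolyOverField.

Section Sqfree.
Variable (F : numFieldType).

Lemma LH (rs : seq F) : exists H : {poly F},
  \prod_(r <- rs) ('X - r%:P) = H * \prod_(r <- undup rs) ('X - r%:P) /\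
  H %| (\prod_(r <- rs) ('X - r%:P))^`().
Proof.
elim: rs => [|a rs [H1 [E1 D1]]] /=.
  by exists 1; rewrite !big_nil mul1r derivC dvdp0.
rewrite big_cons derivM derivXsubC mul1r.
case: ifP => ars.
  exists (('X - a%:P) * H1); split.
    by rewrite E1 mulrA.
  apply: dvdp_add; last exact: dvdp_mul.
  rewrite E1 mulrC; apply: dvdp_mul => //.
  by rewrite dvdp_XsubCl root_prod_XsubC mem_undup.
exists H1; split; first by rewrite big_cons E1 mulrCA.
apply: dvdp_add; last exact: dvdp_mull.
by rewrite E1 dvdp_mulIl.
Qed.

Lemma root_cofactor (P q0 g : {poly F}) (x : F) : P != 0 -> root P x ->
  P = q0 * g -> g %| P^`() -> root q0 x.
Proof.
move=> P0 rx E gd.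
have [k [A rA EA]] := multiplicity_XsubC P x.
move: rA; rewrite P0 /= => rA.
case: k EA => [|k] EA; first by move: rx; rewrite EA expr0 mulr1 (negbTE rA).
case: (boolP (root q0 x)) => // nq.
have cop : coprimep (('X - x%:P) ^+ k.+1) q0.
  by apply: coprimep_expl; rewrite coprimep_sym coprimep_XsubC.
have d1 : ('X - x%:P) ^+ k.+1 %| g.
  by rewrite -(Gauss_dvdpr _ cop) -E EA dvdp_mull.
have d2 := dvdp_trans d1 gd.
move: d2; rewrite EA derivM deriv_exp derivXsubC mul1r /= exprS.
set B := A^`() * ('X - x%:P) + A *+ k.+1.
have -> : A^`() * (('X - x%:P) * ('X - x%:P) ^+ k) + A * (('X - x%:P) ^+ k *+ k.+1)
   = ('X - x%:P) ^+ k * B.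
  by rewrite /B mulrDr; congr (_ + _); ring.
rewrite -exprS exprSr dvdp_mul2l ?expf_neq0 ?polyXsubC_eq0 // dvdp_XsubCl /root /B.
rewrite hornerD hornerM hornerXsubC subrr mulr0 add0r hornerMn mulrn_eq0 /=.
by move: rA; rewrite /root => /negbTE ->.
Qed.

End Sqfree.

Section Sqfree2.
Variables (F : numFieldType) (S : divringClosed F).

Lemma sqfree_over (P : {poly F}) (rs : seq F) : P != 0 ->
  P = lead_coef P *: \prod_(r <- rs) ('X - r%:P) -> P \is a polyOver S ->
  \prod_(r <- undup rs) ('X - r%:P) \is a polyOver S.
Proof.
move=> P0 EP SP.
set Q0 := \prod_(r <- undup rs) ('X - r%:P).
have SP' : P^`() \is a polyOver S by apply: polyOver_deriv.
have [g [Sg Eg]] := gcd_exists SP SP'.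
have g0 : g != 0.
  apply/negP => /eqP g0; move: Eg; rewrite g0 eqp_sym eqp0 gcdp_eq0.
  by rewrite (negbTE P0).
have gP : g %| P by rewrite (eqp_dvdl _ Eg) dvdp_gcdl.
have gP' : g %| P^`() by rewrite (eqp_dvdl _ Eg) dvdp_gcdr.
have [q0 [Sq0 Eq0]] := divexact_over Sg SP g0 gP.
have [H [EH DH]] := LH rs.
set lc := lead_coef P.
have lc0 : lc != 0 by rewrite lead_coef_eq0.
pose H2 := lc *: H.
have EP2 : P = H2 * Q0 by rewrite EP EH /H2 scalerAl.
have H2P : H2 %| P by rewrite EP2 dvdp_mulr.
have H2P' : H2 %| P^`().
  by rewrite EP derivZ /H2 dvdpZl // dvdpZr.
have H2g : H2 %| g by rewrite (eqp_dvdr _ Eg) dvdp_gcd H2P H2P'.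
have [L EL] := dvdpP _ _ H2g.
have H20 : H2 != 0 by apply: contraNneq P0 => h; rewrite EP2 h mul0r.
have EqL : q0 * L = Q0.
  apply: (mulIf H20); rewrite -mulrA -EL -Eq0 EP2 mulrC //.
have q0Q : q0 %| Q0 by rewrite -EqL dvdp_mulr.
have Qq0 : Q0 %| q0.
  have [T ->] : exists T, q0 = T * Q0.
    apply: uniq_roots_prod_XsubC; last by rewrite uniq_rootsE undup_uniq.
    apply/allP => x; rewrite mem_undup => xrs.
    apply: (root_cofactor P0 _ Eq0 gP').
    by rewrite EP rootZ // root_prod_XsubC.
  exact: dvdp_mull.
have Eqp : q0 %= Q0 by rewrite /eqp q0Q Qq0.
have q00 : q0 != 0 by apply: contraNneq P0 => h; rewrite Eq0 h mul0r.
have E2 := eqp_eq Eqp; rewrite (eqP (monic_prod_XsubC _ _ _)) scale1r in E2.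
have -> : Q0 = (lead_coef q0)^-1 *: q0 by rewrite {2}E2 scalerA mulVf ?scale1r ?lead_coef_eq0.
by rewrite polyOverZ // rpredV lead_coefE; apply/polyOverP.
Qed.
End Sqfree2.

Lemma reindex_pairs (T : Type) (idx : T) (op : Monoid.com_law idx) (m : nat) (s : 'S_m)
  (h : 'I_m -> 'I_m -> T) :
  \big[op/idx]_(i < m) \big[op/idx]_(j < m | i != j) h (s i) (s j) =
  \big[op/idx]_(i < m) \big[op/idx]_(j < m | i != j) h i j.
Proof.
rewrite [RHS](reindex_inj (@perm_inj _ s)); apply: eq_bigr => i _.
rewrite [RHS](reindex_inj (@perm_inj _ s)); apply: eq_bigl => j.
by rewrite (inj_eq (@perm_inj _ s)).
Qed.

Lemma msymXU (m : nat) (R : ringType) (s : 'S_m) (i : 'I_m) :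
  msym s ('X_i : {mpoly R[m]}) = 'X_(s i).
Proof. by rewrite /msym mmapX mmap1U. Qed.

Section Sym.
Variables (R : rcfType) (m : nat) (p : 'I_m -> R) (S : divringClosed R).
Hypothesis hQ : \prod_(i < m) ('X - (p i)%:P) \is a polyOver S.

Definition phi (f : {mpoly rat[m]}) : R := (map_mpoly (ratr : rat -> R) f).@[p].

Lemma map_mesym k : map_mpoly (ratr : rat -> R) (mesym m rat k) = mesym m R k.
Proof.
rewrite !mesymE raddf_sum /=; apply: eq_bigr => h _; exact: map_mpolyX.
Qed.

Lemma mesym_in_S k : (mesym m R k).@[p] \in S.
Proof.
case: (leqP k m) => km; last by rewrite mesym_geqnE // meval0 rpred0.
pose cs := [tuple p i | i < m].
have := mroots_coeff cs (Ordinal (km : (k < m.+1)%N)) => /=.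
have -> : \prod_(c <- cs) ('X - c%:P) = \prod_(i < m) ('X - (p i)%:P).
  by rewrite big_tuple; apply: eq_bigr => i _; rewrite tnth_mktuple.
have -> : (mesym m R k).@[tnth cs] = (mesym m R k).@[p].
  by apply: meval_eq => i; rewrite tnth_mktuple.
move=> E.
have -> : (mesym m R k).@[p] = (-1) ^+ k * (\prod_(i < m) ('X - (p i)%:P))`_(m - k).
  by rewrite E mulrA -exprMn mulrNN mulr1 expr1n mul1r.
by rewrite rpredM ?rpredX ?rpredN ?rpred1 //; apply/polyOverP.
Qed.

Lemma meval_rat_in_S (t : {mpoly rat[m]}) (w : 'I_m -> R) :
  (forall i, w i \in S) -> (map_mpoly (ratr : rat -> R) t).@[w] \in S.
Proof.
move=> Sw; rewrite mevalE; apply: rpred_sum => mm _.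
rewrite mcoeff_map_mpoly rpredM ?rpred_rat //.
by apply: rpred_prod => i _; rewrite rpredX.
Qed.

Lemma symS (f : {mpoly rat[m]}) : f \is symmetric -> phi f \in S.
Proof.
move=> fsym; have [t [Et _]] := sym_fundamental fsym.
rewrite /phi -Et map_mpoly_comp; last exact: fmorph_inj.
rewrite comp_mpoly_meval; apply: meval_rat_in_S => i.
by rewrite tnth_map tnth_mktuple map_mesym mesym_in_S.
Qed.

End Sym.

Lemma phi_is_additive (R : rcfType) (m : nat) (p : 'I_m -> R) : additive (phi p).
Proof. by move=> x y; rewrite /phi !rmorphB. Qed.
Lemma phi_is_mult (R : rcfType) (m : nat) (p : 'I_m -> R) : multiplicative (phi p).
Proof. by split; [move=> x y; rewrite /phi !rmorphM | rewrite /phi !rmorph1]. Qed.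
HB.instance Definition _ (R : rcfType) (m : nat) (p : 'I_m -> R) :=
  GRing.isAdditive.Build _ _ (phi p) (phi_is_additive p).
HB.instance Definition _ (R : rcfType) (m : nat) (p : 'I_m -> R) :=
  GRing.isMultiplicative.Build _ _ (phi p) (phi_is_mult p).
Lemma phiXU (R : rcfType) (m : nat) (p : 'I_m -> R) i : phi p 'X_i = p i.
Proof. by rewrite /phi /map_mpoly mmapX mmap1U mevalXU. Qed.

Section FPoly.
Variables (R : rcfType) (m : nat) (p : 'I_m -> R) (S : divringClosed R).
Hypothesis hQ : \prod_(i < m) ('X - (p i)%:P) \is a polyOver S.

Definition Fg : {poly {mpoly rat[m]}} :=
  \prod_(i < m) \prod_(j < m | i != j) ('X - ((('X_i - 'X_j) ^+ 2 : {mpoly rat[m]}))%:P).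

Definition Fp : {poly R} :=
  \prod_(i < m) \prod_(j < m | i != j) ('X - ((p i - p j) ^+ 2)%:P).

Lemma Fg_sym k : Fg`_k \is symmetric.
Proof.
apply/issymP => s; rewrite -coef_map.
suff -> : map_poly (msym s) Fg = Fg by [].
rewrite /Fg rmorph_prod /= -[RHS](reindex_pairs _ s (fun i j => 'X - ((('X_i - 'X_j) ^+ 2 : {mpoly rat[m]}))%:P)).
apply: eq_bigr => i _.
rewrite rmorph_prod /=; apply: eq_bigr => j _.
by rewrite rmorphB /= map_polyX map_polyC /= rmorphXn rmorphB /= !msymXU.
Qed.

Lemma Fp_map : map_poly (meval p) (map_poly (map_mpoly (ratr : rat -> R)) Fg) = Fp.
Proof.
rewrite /Fg !rmorph_prod /=; apply: eq_bigr => i _.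
rewrite !rmorph_prod /=; apply: eq_bigr => j _.
rewrite !rmorphB /= !map_polyX !map_polyC /= !rmorphXn !rmorphB /=.
by rewrite /map_mpoly !mmapX !mmap1U !mevalXU.
Qed.

Lemma Fp_over : Fp \is a polyOver S.
Proof.
apply/polyOverP => k; rewrite -Fp_map !coef_map /=.
exact: (symS hQ (Fg_sym k)).
Qed.

Definition Sg : {mpoly rat[m]} :=
  \sum_(i < m) \sum_(j < m | i != j) ('X_i - 'X_j) ^+ 2.

Lemma Sg_in : \sum_(i < m) \sum_(j < m | i != j) (p i - p j) ^+ 2 \in S.
Proof.
have -> : \sum_(i < m) \sum_(j < m | i != j) (p i - p j) ^+ 2 = phi p Sg.
  rewrite /Sg rmorph_sum; apply: eq_bigr => i _.
  rewrite rmorph_sum; apply: eq_bigr => j _.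
  by rewrite rmorphXn rmorphB /= !phiXU.
apply: (symS hQ); apply/issymP => s.
rewrite /Sg rmorph_sum /= -[RHS](reindex_pairs _ s (fun i j => ('X_i - 'X_j) ^+ 2 : {mpoly rat[m]})).
apply: eq_bigr => i _.
rewrite rmorph_sum /=; apply: eq_bigr => j _.
by rewrite rmorphXn rmorphB /= !msymXU.
Qed.

End FPoly.

Section LogDer.
Variable (R : fieldType).
Lemma logder (I : Type) (r : seq I) (P : pred I) (a : I -> R) (c : R) :
  (forall x, P x -> c - a x != 0) ->
  (\prod_(x <- r | P x) ('X - (a x)%:P))^`().[c] =
  (\prod_(x <- r | P x) ('X - (a x)%:P)).[c] * \sum_(x <- r | P x) (c - a x)^-1.
Proof.
move=> ha; elim: r => [|y r IH]; first by rewrite !big_nil mulr0 -polyC1 derivC horner0.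
rewrite !big_cons; case: ifP => Py //.
rewrite derivM derivXsubC mul1r hornerD !hornerM IH hornerXsubC.
have := ha _ Py => h; field.
exact: h.
Qed.
End LogDer.

Section Pairs.
Variables (R : rcfType) (m : nat) (p : 'I_m -> R).

Lemma eq_pairsum (f g : R -> R) : f =1 g -> pairsum p f = pairsum p g.
Proof.
by move=> fg; apply: eq_bigr => i _; apply: eq_bigr => j _; rewrite fg.
Qed.

Lemma pairsum_ne (g : R -> R) : (forall d, g (- d) = g d) ->
  \sum_(i < m) \sum_(j < m | i != j) g (p i - p j) = pairsum p g *+ 2.
Proof.
move=> ge; rewrite /pairsum !pair_big_dep /=.
rewrite (bigID (fun u : 'I_m * 'I_m => (u.1 < u.2)%N)) /= mulr2n; congr (_ + _).
  apply: eq_bigl => u; case: (ltngtP u.1 u.2) => h; rewrite ?andbT ?andbF //=.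
  by rewrite -val_eqE /= neq_ltn h.
rewrite (reindex_inj (h := fun u : 'I_m * 'I_m => (u.2, u.1))); last first.
  by move=> [a b] [c d] /= [-> ->].
apply: eq_big => [u|u _] /=.
  case: (ltngtP u.1 u.2) => h; rewrite -val_eqE /= ?neq_ltn ?h ?orbT //=.
  by rewrite ltnn.
by rewrite -ge opprB.
Qed.

Variable (S : divringClosed R).
Hypothesis hQ : \prod_(i < m) ('X - (p i)%:P) \is a polyOver S.

Lemma Fp_pairs : Fp p = \prod_(u : 'I_m * 'I_m | u.1 != u.2) ('X - ((p u.1 - p u.2) ^+ 2)%:P).
Proof. by rewrite /Fp pair_big_dep. Qed.

Lemma step_in_S (c : R) : c \in S ->
  (forall i j : 'I_m, (i < j)%N -> (p i - p j) ^+ 2 - c != 0) ->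
  pairsum p (fun d => (d ^+ 2 - c)^-1) \in S.
Proof.
move=> Sc hne.
have hne' : forall u : 'I_m * 'I_m, u.1 != u.2 -> c - (p u.1 - p u.2) ^+ 2 != 0.
  move=> [i j] /= ij; rewrite -oppr_eq0 opprB.
  case: (ltngtP i j) => h; first exact: hne.
    by rewrite -sqrrN opprB; exact: hne.
  by move: ij; rewrite -val_eqE /= h eqxx.
have Fc : (Fp p).[c] != 0.
  rewrite Fp_pairs horner_prod; apply/prodf_neq0 => u hu.
  by rewrite hornerXsubC; apply: hne'.
have LD := @logder _ _ (index_enum _) (fun u : 'I_m * 'I_m => u.1 != u.2)
   (fun u => (p u.1 - p u.2) ^+ 2) c hne'.
rewrite -Fp_pairs in LD.
have E : pairsum p (fun d => (d ^+ 2 - c)^-1) = - ((Fp p)^`().[c] / (Fp p).[c]) / 2%:R.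
  rewrite LD mulrAC mulfV // mul1r.
  have gsym : forall d : R, ((- d) ^+ 2 - c)^-1 = (d ^+ 2 - c)^-1 by move=> d; rewrite sqrrN.
  have := pairsum_ne (g := fun d => (d ^+ 2 - c)^-1) gsym.
  rewrite pair_big_dep /= => E2.
  rewrite -sumrN.
  have -> : \sum_(u : 'I_m * 'I_m | u.1 != u.2) - (c - (p u.1 - p u.2) ^+ 2)^-1
          = \sum_(u : 'I_m * 'I_m | u.1 != u.2) ((p u.1 - p u.2) ^+ 2 - c)^-1.
    by apply: eq_bigr => u _; rewrite -invrN opprB.
  by rewrite E2 -(mulr_natr (pairsum _ _)) mulfK // pnatr_eq0.
rewrite E rpredM ?rpredN ?rpredV ?rpred_nat // rpred_div //.
  by apply: rpred_horner => //; apply: polyOver_deriv; exact: Fp_over.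
by apply: rpred_horner => //; exact: Fp_over.
Qed.

End Pairs.

Unset Implicit Arguments.

Section Main.
Variables (R : rcfType) (P : {poly R}) (m : nat) (p : 'I_m -> R).
Hypotheses (P0 : P != 0) (Preal : all_roots_real P) (m3 : (3 <= m)%N)
  (pinc : forall i j : 'I_m, (i < j)%N -> p i < p j)
  (proots : forall x : R, root P x <-> exists i : 'I_m, x = p i).

Let SS := Sb (@coefs R P).

Lemma P_over : P \is a polyOver SS.
Proof.
apply/polyOverP => i; case: (ltnP i (size P)) => hi.
  have -> : P`_i = @coefs R P (Ordinal hi) by [].
  by rewrite -evX Sb_ev.
by rewrite nth_default // rpred0.
Qed.

Lemma p_inj : injective p.
Proof.
move=> i j E; apply/eqP; apply/negP => /negP ne.
case: (ltngtP i j) => h.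
- by have := pinc _ _ h; rewrite E ltxx.
- by have := pinc _ _ h; rewrite E ltxx.
- by move: ne; rewrite -val_eqE /= h eqxx.
Qed.

Lemma Q_over : \prod_(i < m) ('X - (p i)%:P) \is a polyOver SS.
Proof.
have [rs Ers] := Preal.
have := sqfree_over P0 Ers P_over.
have -> : \prod_(i < m) ('X - (p i)%:P) = \prod_(x <- [seq p i | i in 'I_m]) ('X - x%:P).
  by rewrite big_image.
suff hperm : perm_eq (undup rs) [seq p i | i in 'I_m] by rewrite (perm_big _ hperm).
apply: uniq_perm; first exact: undup_uniq.
  by rewrite map_inj_uniq ?enum_uniq //; exact: p_inj.
move=> x; rewrite mem_undup.
have lc0 : lead_coef P != 0 by rewrite lead_coef_eq0.
have -> : (x \in rs) = root P x by rewrite Ers rootZ // root_prod_XsubC.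
apply/idP/idP.
  move/proots => [i ->]; apply/mapP; exists i => //; by rewrite mem_enum.
by move/mapP => [i _ ->]; apply/proots; exists i.
Qed.

Lemma d2pos' (i j : 'I_m) : i != j -> 0 < (p i - p j) ^+ 2.
Proof.
move=> ij; case: (ltngtP i j) => h; first exact: (d2pos R m p pinc).
  by rewrite -sqrrN opprB; exact: (d2pos R m p pinc).
by move: ij; rewrite -val_eqE /= h eqxx.
Qed.

Lemma mu2_in k : mu2 p k \in SS.
Proof.
have hQ := Q_over.
elim: k => [|k IH] /=.
  rewrite rpredV (@eq_pairsum R m p _ (fun d => (d ^+ 2 - 0)^-1)); last by move=> d; rewrite subr0.
  apply: (step_in_S hQ) => [|i j ij]; first exact: rpred0.
  by rewrite subr0 gt_eqF // (d2pos R m p pinc).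
rewrite rpredD // rpredV; apply: (step_in_S hQ) => // i j ij.
by rewrite gt_eqF // subr_gt0; have [_ ->] := mu_bound R m p m3 pinc k.
Qed.

Lemma M2_in k : M2 p k \in SS.
Proof.
have hQ := Q_over.
elim: k => [|k IH] /=.
  have gs : forall d : R, (- d) ^+ 2 = d ^+ 2 by move=> d; rewrite sqrrN.
  have E := pairsum_ne p (g := fun d => d ^+ 2) gs.
  have -> : pairsum p (fun d => d ^+ 2) = (\sum_(i < m) \sum_(j < m | i != j) (p i - p j) ^+ 2) / 2%:R.
    by rewrite E -(mulr_natr (pairsum _ _)) mulfK // pnatr_eq0.
  by rewrite rpred_div ?rpred_nat // Sg_in.
rewrite rpredD // rpredV; apply: (step_in_S hQ) => // i j ij.
by rewrite lt_eqF // subr_lt0; have [_ ->] := M_bound R m p m3 pinc k.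
Qed.

Lemma mu_ne k (i j : 'I_m) : i != j -> mu2 p k < (p i - p j) ^+ 2.
Proof.
have [_ cb] := mu_bound R m p m3 pinc k.
move=> ij; case: (ltngtP i j) => h; first exact: cb.
  by rewrite -sqrrN opprB; exact: cb.
by move: ij; rewrite -val_eqE /= h eqxx.
Qed.

Lemma M_ne k (i j : 'I_m) : i != j -> (p i - p j) ^+ 2 < M2 p k.
Proof.
have [_ cb] := M_bound R m p m3 pinc k.
move=> ij; case: (ltngtP i j) => h; first exact: cb.
  by rewrite -sqrrN opprB; exact: cb.
by move: ij; rewrite -val_eqE /= h eqxx.
Qed.

Lemma pairsum_negE (c : R) :
  pairsum p (fun d => (d ^+ 2 - c)^-1) = - pairsum p (fun d => (c - d ^+ 2)^-1).
Proof.
rewrite /pairsum -sumrN; apply: eq_bigr => i _; rewrite -sumrN.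
by apply: eq_bigr => j _; rewrite -invrN opprB.
Qed.

Lemma Mdiam_ge : exists i j : 'I_m, i != j /\ `|p i - p j| <= Mdiam p.
Proof.
have h0 : (0 < m)%N by apply: leq_trans m3.
have h1 : (1 < m)%N by apply: leq_trans m3.
exists (Ordinal h0), (Ordinal h1); split => //.
rewrite /Mdiam.
apply: le_trans (le_bigmax _ (fun j => `|p (Ordinal h0) - p j|) (Ordinal h1)) _.
exact: (le_bigmax _ (fun i => \big[Num.max/0]_(j < m) `|p i - p j|) (Ordinal h0)).
Qed.

Lemma main_sec :
  [/\ pairsum p (fun d => (d ^+ 2)^-1) != 0,
      (forall k, wd_step p (mu2 p k)) &
      (forall k, wd_step p (M2 p k))] /\
  (forall k, 0 < mu2 p k /\ 0 < muk p k /\ muk p k < mudist p) /\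
  (forall k, 0 < M2 p k /\ Mdiam p < Mk p k) /\
  (forall k, rat_fun_of_coefs P (mu2 p k) /\ rat_fun_of_coefs P (M2 p k)).
Proof.
have mb := mu_bound R m p m3 pinc; have Mb := M_bound R m p m3 pinc.
split; [split|split; [|split]].
- rewrite gt_eqF //; apply: (pairsum_pos R m p m3) => i j ij.
  by rewrite invr_gt0 (d2pos R m p pinc).
- move=> k; have [c0 cb] := mb k; split.
    by move=> i j ij; rewrite gt_eqF // subr_gt0 cb.
  rewrite gt_eqF //; apply: (pairsum_pos R m p m3) => i j ij.
  by rewrite invr_gt0 subr_gt0 cb.
- move=> k; have [c0 cb] := Mb k; split.
    by move=> i j ij; rewrite lt_eqF // subr_lt0 cb.
  rewrite pairsum_negE oppr_eq0 gt_eqF //; apply: (pairsum_pos R m p m3) => i j ij.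
  by rewrite invr_gt0 subr_gt0 cb.
- move=> k; have [c0 cb] := mb k; split => //.
  have s0 : 0 < muk p k by rewrite /muk sqrtr_gt0.
  split => //.
  have key : forall i j : 'I_m, i != j -> muk p k < `|p i - p j|.
    move=> i j ij; rewrite /muk -sqrtr_sqr ltr_sqrt; first exact: mu_ne.
    by apply: lt_trans c0 _; exact: mu_ne.
  have [i0 [j0 [ij0 le0]]] := Mdiam_ge.
  have kM : muk p k < Mdiam p by apply: lt_le_trans (key _ _ ij0) le0.
  rewrite /mudist; apply: lt_bigmin => // i _.
  by apply: lt_bigmin => // j ij; apply: key.
- move=> k; have [c0 cb] := Mb k; split => //.
  have s0 : 0 < Mk p k by rewrite /Mk sqrtr_gt0.
  rewrite /Mdiam; apply: bigmax_lt => // i _; apply: bigmax_lt => // j _.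
  have [->|ij] := eqVneq i j; first by rewrite subrr normr0.
  rewrite /Mk -sqrtr_sqr ltr_sqrt //; exact: M_ne.
- move=> k; split.
    by have /SbP := mu2_in k.
  by have /SbP := M2_in k.
Qed.

End Main.

Theorem mainTheorem6 (R : rcfType) (P : {poly R}) (m : nat) (p : 'I_m -> R) :
  P != 0 ->
  all_roots_real P ->
  (3 <= m)%N ->
  (forall i j : 'I_m, (i < j)%N -> p i < p j) ->
  (forall x : R, root P x <-> exists i : 'I_m, x = p i) ->
  (* well defined *)
  [/\ pairsum p (fun d => (d ^+ 2)^-1) != 0,
      (forall k, wd_step p (mu2 p k)) &
      (forall k, wd_step p (M2 p k))] /\
  (* bounds *)
  (forall k, 0 < mu2 p k /\ 0 < muk p k /\ muk p k < mudist p) /\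
  (forall k, 0 < M2 p k /\ Mdiam p < Mk p k) /\
  (* rationality in the coefficients of P *)
  (forall k, rat_fun_of_coefs P (mu2 p k) /\ rat_fun_of_coefs P (M2 p k)).
Proof. by move=> *; apply: main_sec. Qed.
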